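(* Let $\lambda>0$, $L>0$, and let $d,k,T$ be positive integers. Let $\{\{x_t(i)\}_{i\in[k]}\}_{t\in[T]}$ be any sequence of vectors $x_t(i)\in\mathbb{R}^d$ with $\|x_t(i)\|_2\le L$ for all $i\in[k]$, $t\in[T]$. Let $V_0=\lambda I$ and $V_t=\lambda I+\sum_{t'\in[t]}\sum_{i\in[k]}x_{t'}(i)x_{t'}(i)^\top$ for $t\in[T]$. Then $$\sum_{t\in[T]}\sum_{i\in[k]}\min\Big(\frac{1}{\sqrt{k}},\ \|x_t(i)\|_{V_{t-1}^{-1}}\Big)=\tilde{O}\big(\sqrt{dkT}\big)$$ and $$\sum_{t\in[T]}\sum_{i\in[k]}\mathbb{1}\Big(\|x_t(i)\|_{V_{t-1}^{-1}}>1/\sqrt{k}\Big)=\tilde{O}(dk).$$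
   Context: For a positive definite matrix $A$ and vector $x$, $\|x\|_{A}=\sqrt{x^\top A x}$. $[n]=\{1,\dots,n\}$. The notation $\tilde{O}(\cdot)$ hides logarithmic factors (here, factors logarithmic in $1+L^2kT/(d\lambda)$). *)

(* Defs.v *)
From HB Require Import structures.
From mathcomp Require Import all_boot all_order all_algebra.
From mathcomp Require Import reals exp.
Set Implicit Arguments. Unset Strict Implicit. Unset Printing Implicit Defensive.
Import Order.TTheory GRing.Theory Num.Theory.
Local Open Scope ring_scope.

Definition norm2 (R : realType) (d : nat) (v : 'cV[R]_d) : R :=
  Num.sqrt (\sum_(j < d) v j 0 ^+ 2).

Definition mnorm (R : realType) (d : nat) (A : 'M[R]_d) (v : 'cV[R]_d) : R :=
  Num.sqrt ((v^T *m A *m v) 0 0).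

(* Gram matrix V_t = lam I + sum_{t'=1}^{t} sum_i x_{t'}(i) x_{t'}(i)^T ;
   rounds are indexed by nat, t' ranging over 1..t, so V 0 = lam I. *)
Definition Vmat (R : realType) (d k : nat) (lam : R)
  (x : nat -> 'I_k -> 'cV[R]_d) (t : nat) : 'M[R]_d :=
  lam%:M + \sum_(1 <= t' < t.+1) \sum_(i < k) (x t' i *m (x t' i)^T).

(* The polylogarithmic slack hidden by O~ : (1 + ln(1 + L^2 k T/(d lam)))^p *)
Definition logfac (R : realType) (lam L : R) (d k T p : nat) : R :=
  (1 + ln (1 + L ^+ 2 * k%:R * T%:R / (d%:R * lam))) ^+ p.

(* Main.v *)
Require Import Defs.
From HB Require Import structures.
From mathcomp Require Import all_boot all_order all_algebra.
From mathcomp Require Import reals exp.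
From mathcomp Require Import ring lra.
Import Order.TTheory GRing.Theory Num.Theory.
Local Open Scope ring_scope.
Set Implicit Arguments. Unset Strict Implicit. Unset Printing Implicit Defensive.

Section QF.
Variable R : realType.

Definition bf n (M : 'M[R]_n) (u w : 'cV[R]_n) : R := (u^T *m M *m w) 0 0.
Definition qf n (M : 'M[R]_n) (u : 'cV[R]_n) : R := bf M u u.



Lemma bf_symT n (M : 'M[R]_n) u w : M^T = M -> bf M u w = bf M w u.
Proof.
move=> sM; rewrite /bf.
have -> : (w^T *m M *m u) = (u^T *m M *m w)^T.
  by rewrite !trmx_mul trmxK sM mulmxA.
by rewrite [in RHS]mxE.
Qed.

Lemma bfDl n (M : 'M[R]_n) u v w : bf M (u + v) w = bf M u w + bf M v w.
Proof. by rewrite /bf linearD /= !mulmxDl mxE. Qed.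
Lemma bfDr n (M : 'M[R]_n) u v w : bf M w (u + v) = bf M w u + bf M w v.
Proof. by rewrite /bf mulmxDr mxE. Qed.
Lemma bfZl n (M : 'M[R]_n) a u w : bf M (a *: u) w = a * bf M u w.
Proof. by rewrite /bf linearZ /= -!scalemxAl mxE. Qed.
Lemma bfZr n (M : 'M[R]_n) a u w : bf M w (a *: u) = a * bf M w u.
Proof. by rewrite /bf -scalemxAr mxE. Qed.
Lemma bfNl n (M : 'M[R]_n) u w : bf M (- u) w = - bf M u w.
Proof. by rewrite -scaleN1r bfZl mulN1r. Qed.
Lemma bfNr n (M : 'M[R]_n) u w : bf M w (- u) = - bf M w u.
Proof. by rewrite -scaleN1r bfZr mulN1r. Qed.

Lemma CS n (M : 'M[R]_n) u w : M^T = M -> (forall z, 0 <= qf M z) ->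
  bf M u w ^+ 2 <= qf M u * qf M w.
Proof.
move=> sM psd.
set A := qf M u; set B := bf M u w; set C := qf M w.
have e : forall a b, qf M (a *: u + b *: w) = a^+2 * A + 2 * a * b * B + b^+2 * C.
  move=> a b; rewrite /qf !(bfDl, bfDr, bfZl, bfZr) (bf_symT w u sM) -/A -/B -/C.
  by rewrite /A /C /qf; ring.
have h1 := psd (C *: u + (- B) *: w); rewrite e in h1.
have h2 := psd (B *: u + (- A) *: w); rewrite e in h2.
have h3 := psd (1 *: u + (- B) *: w); rewrite e in h3.
have hA : 0 <= A by apply: psd.
have hC : 0 <= C by apply: psd.
have h1' : 0 <= C * (A * C - B ^+ 2) by lra.
have h2' : 0 <= A * (A * C - B ^+ 2) by lra.
rewrite -subr_ge0.
have [Cp|] := ltrP 0 C; first by rewrite -(pmulr_rge0 _ Cp).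
have [Ap|] := ltrP 0 A; first by rewrite -(pmulr_rge0 _ Ap).
move=> hA0 hC0; have eA : A = 0 by apply/le_anti; rewrite hA0 hA.
have eC : C = 0 by apply/le_anti; rewrite hC0 hC.
rewrite eA eC in h3 *; nra.
Qed.
Lemma det_rank1 n (u v : 'cV[R]_n) :
  \det (1%:M + u *m v^T) = 1 + (v^T *m u) 0 0.
Proof.
pose P := block_mx (1%:M : 'M_n) u (- v^T) (1%:M : 'M_1).
have e1 : P = block_mx 1%:M 0 (- v^T) 1%:M *m block_mx 1%:M u 0 (1%:M + v^T *m u).
  by rewrite mulmx_block !(mul0mx, mulmx0, mul1mx, mulmx1, addr0, add0r) mulNmx addrCA addNr addr0.
have e2 : P = block_mx (1%:M + u *m v^T) u 0 1%:M *m block_mx 1%:M 0 (- v^T) 1%:M.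
  by rewrite mulmx_block !(mul0mx, mulmx0, mul1mx, mulmx1, addr0, add0r) mulmxN addrK.
have := congr1 determinant e1; rewrite e2 !det_mulmx det_lblock det_ublock !det1 !mul1r !mulr1.
by move=> ->; rewrite det_ublock det1 mul1r det_mx11 !mxE eqxx.
Qed.

Definition Good n (W : 'M[R]_n) := [/\ W^T = W, (forall z, 0 <= qf W z) & 0 < \det W].

Lemma Good_unit n (W : 'M[R]_n) : Good W -> W \in unitmx.
Proof. by case=> _ _ h; rewrite unitmxE unitfE gt_eqF. Qed.

Lemma inv_sym n (W : 'M[R]_n) : W^T = W -> (invmx W)^T = invmx W.
Proof. by move=> s; rewrite trmx_inv s. Qed.

Lemma qf_inv n (W : 'M[R]_n) z : Good W ->
  qf (invmx W) z = qf W (invmx W *m z).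
Proof.
move=> G; have [sW _ _] := G; have U := Good_unit G.
rewrite /qf /bf trmx_mul inv_sym //.
by rewrite -[z^T *m invmx W *m W]mulmxA mulVmx // mulmx1 mulmxA.
Qed.

Lemma qf_inv_ge0 n (W : 'M[R]_n) z : Good W -> 0 <= qf (invmx W) z.
Proof. by move=> G; rewrite qf_inv //; case: G => _ h _; apply: h. Qed.

Lemma qf_addM n (A B : 'M[R]_n) z : qf (A + B) z = qf A z + qf B z.
Proof. by rewrite /qf /bf mulmxDr mulmxDl mxE. Qed.

Lemma qf_sumM n I (r : seq I) (F : I -> 'M[R]_n) z :
  qf (\sum_(i <- r) F i) z = \sum_(i <- r) qf (F i) z.
Proof. by rewrite /qf /bf mulmx_sumr mulmx_suml summxE. Qed.

Lemma mx11_mul (A B : 'M[R]_1) : (A *m B) 0 0 = A 0 0 * B 0 0.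
Proof. by rewrite mxE big_ord1. Qed.

Lemma qf_rank1 n (y z : 'cV[R]_n) : qf (y *m y^T) z = ((y^T *m z) 0 0) ^+ 2.
Proof.
rewrite /qf /bf.
have -> : z^T *m (y *m y^T) *m z = (z^T *m y) *m (y^T *m z) by rewrite !mulmxA.
rewrite mx11_mul expr2; congr (_ * _).
have -> : z^T *m y = (y^T *m z)^T by rewrite trmx_mul trmxK.
by rewrite mxE.
Qed.

Lemma det_add_rank1 n (W : 'M[R]_n) (y : 'cV[R]_n) : W \in unitmx ->
  \det (W + y *m y^T) = \det W * (1 + qf (invmx W) y).
Proof.
move=> U.
have -> : W + y *m y^T = W *m (1%:M + (invmx W *m y) *m y^T).
  by rewrite mulmxDr mulmx1 !mulmxA mulmxV // mul1mx.
by rewrite det_mulmx det_rank1 /qf /bf mulmxA.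
Qed.

Lemma Good_add n (W : 'M[R]_n) (y : 'cV[R]_n) : Good W -> Good (W + y *m y^T).
Proof.
move=> G; have [sW pW dW] := G; split.
- by rewrite linearD /= sW trmx_mul trmxK.
- by move=> z; rewrite qf_addM qf_rank1 addr_ge0 ?sqr_ge0.
- rewrite det_add_rank1 ?Good_unit // mulr_gt0 //.
  by rewrite ltr_wpDr ?qf_inv_ge0.
Qed.

Lemma Good_sum n (W : 'M[R]_n) I (r : seq I) (f : I -> 'cV[R]_n) :
  Good W -> Good (W + \sum_(i <- r) f i *m (f i)^T).
Proof.
move=> G; elim: r => [|i r IH]; first by rewrite big_nil addr0.
by rewrite big_cons addrCA addrC; apply: Good_add.
Qed.

Lemma step n (W : 'M[R]_n) I (r : seq I) (f : I -> 'cV[R]_n) y :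
  Good W ->
  qf (invmx W) y <=
  qf (invmx (W + \sum_(i <- r) f i *m (f i)^T)) y *
     (1 + \sum_(i <- r) qf (invmx W) (f i)).
Proof.
move=> G; have G' := Good_sum r f G.
set W' := W + _ in G' *.
set a := qf (invmx W) y; set S := \sum_(i <- r) _.
set a' := qf (invmx W') y.
have [sW pW dW] := G; have [sW' pW' dW'] := G'.
have U := Good_unit G; have U' := Good_unit G'.
have a0 : 0 <= a by apply: qf_inv_ge0.
have a'0 : 0 <= a' by apply: qf_inv_ge0.
have S0 : 0 <= S by apply: sumr_ge0 => i _; apply: qf_inv_ge0.
pose p := invmx W *m y.
have e1 : qf W' p = a + \sum_(i <- r) (bf (invmx W) (f i) y) ^+ 2.
  rewrite /W' qf_addM qf_sumM -qf_inv //; congr (_ + _).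
  apply: eq_bigr => i _; rewrite qf_rank1 /bf /p mulmxA //.
have e2 : qf W' p <= a * (1 + S).
  rewrite e1 mulrDr mulr1 lerD2l /S mulr_sumr; apply: ler_sum => i _.
  rewrite mulrC; apply: CS; first exact: inv_sym.
  by move=> z; apply: qf_inv_ge0.
have e3 : a = bf (invmx W') y (W' *m p).
  by rewrite /bf mulmxA -[_ *m invmx W' *m W']mulmxA mulVmx // mulmx1 /p mulmxA.
have e4 : qf (invmx W') (W' *m p) = qf W' p.
  by rewrite /qf /bf trmx_mul sW' -[p^T *m W' *m invmx W']mulmxA mulmxV // mulmx1 mulmxA.
have CS1 : a ^+ 2 <= a' * qf W' p.
  rewrite -e4 {1}e3; apply: CS; first exact: inv_sym.
  by move=> z; apply: qf_inv_ge0.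
have [ap|] := ltrP 0 a; last first.
  move=> ale; have -> : a = 0 by apply/le_anti; rewrite ale a0.
  by rewrite mulr_ge0 // addr_ge0.
have h : a ^+ 2 <= a' * (a * (1 + S)).
  apply: le_trans CS1 _; apply: ler_wpM2l => //.
rewrite expr2 mulrCA in h.
by rewrite -(ler_pM2l ap).
Qed.

Lemma batch n (W : 'M[R]_n) I (r : seq I) (f : I -> 'cV[R]_n) :
  Good W ->
  \det W * (1 + \sum_(i <- r) qf (invmx W) (f i)) <=
  \det (W + \sum_(i <- r) f i *m (f i)^T).
Proof.
move=> G; have [sW pW dW] := G.
elim: r => [|i r IH]; first by rewrite !big_nil !addr0 mulr1.
have G' := Good_sum r f G.
rewrite big_cons [in X in _ <= X]big_cons [in X in _ <= X]addrCA [in X in _ <= X]addrC det_add_rank1 ?Good_unit //.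
have st := step r f (f i) G.
set a := qf (invmx W) (f i) in st *; set S := \sum_(j <- r) qf (invmx W) (f j) in st IH *.
set a' := qf (invmx _) (f i) in st *.
have a'0 : 0 <= a' by apply: qf_inv_ge0.
have S0 : 0 <= S by apply: sumr_ge0 => j _; apply: qf_inv_ge0.
apply: le_trans (_ : \det W * ((1 + S) * (1 + a')) <= _).
  rewrite ler_pM2l //; nra.
by rewrite mulrA ler_wpM2r // addr_ge0.
Qed.

Definition PD n (V : 'M[R]_n) := forall z, z != 0 -> 0 < qf V z.

Lemma qf_delta n (V : 'M[R]_n) i : qf V (delta_mx i 0) = V i i.
Proof.
rewrite /qf /bf trmx_delta -rowE -colE !mxE. reflexivity.
Qed.

Lemma delta_neq0 n (i : 'I_n) : (delta_mx i 0 : 'cV[R]_n) != 0.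
Proof.
apply/eqP => h; have := congr1 (fun M : 'cV[R]_n => M i 0) h.
by rewrite !mxE !eqxx /=; move/eqP; rewrite oner_eq0.
Qed.

Lemma PD_diag n (V : 'M[R]_n) i : PD V -> 0 < V i i.
Proof. by move=> P; rewrite -qf_delta; apply/P/delta_neq0. Qed.

Lemma qf_mulT n (V E : 'M[R]_n) z : qf (E *m V *m E^T) z = qf V (E^T *m z).
Proof. by rewrite /qf /bf trmx_mul trmxK !mulmxA. Qed.

Lemma schur n (V : 'M[R]_(1 + n)) : V^T = V -> PD V ->
  let S := drsubmx V - (V 0 0)^-1 *: (dlsubmx V *m ursubmx V) in
  [/\ S^T = S, PD S, \det V = V 0 0 * \det S &
      forall i, S i i <= V (rshift 1 i) (rshift 1 i)].
Proof.
move=> sV P S.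
set a := ulsubmx V; set b := ursubmx V; set c := dlsubmx V; set D := drsubmx V.
set al := V 0 0.
have alp : 0 < al by apply: PD_diag.
have ea : a = al%:M.
  by rewrite [a]mx11_scalar /a !mxE /al; congr (_%:M); congr (V _ _); apply: val_inj.
have ec : c = b^T by rewrite /b trmx_ursub sV.
have eD : D^T = D by rewrite /D trmx_drsub sV.
have eV : V = block_mx a b c D by rewrite submxK.
pose E := block_mx (1%:M : 'M_1) 0 (- al^-1 *: c) (1%:M : 'M_n).
have eET : E^T = block_mx 1%:M (- al^-1 *: b) 0 1%:M.
  by rewrite /E tr_block_mx !trmx1 trmx0 linearZ /= ec trmxK.
have eEV : E *m V *m E^T = block_mx a 0 0 S.
  rewrite eET eV /E !mulmx_block.
  have al0 : al != 0 by rewrite gt_eqF.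
  rewrite ea !(mul1mx, mulmx1, mul0mx, mulmx0, addr0, add0r) mul_scalar_mx mul_mx_scalar !scalerA mulrN mulfV // !scaleN1r !addNr mul0mx add0r -scalemxAl scaleNr addrC.
  reflexivity.
have eS : S = D - al^-1 *: (c *m b) by reflexivity.
have cbT : (c *m b)^T = c *m b by rewrite trmx_mul ec trmxK.
split.
- by rewrite eS linearD linearN linearZ /= cbT eD.
- move=> z nz.
  have nz' : E^T *m col_mx 0 z != 0.
    rewrite eET mul_block_col !(mul0mx, mulmx0, addr0, add0r, mul1mx).
    by rewrite col_mx_eq0 negb_and nz orbT.
  have := P _ nz'.
  rewrite -qf_mulT eEV /qf /bf [(col_mx 0 z)^T]tr_col_mx trmx0 mul_row_block mul_row_col.
  by rewrite !(mul0mx, mulmx0, addr0, add0r).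
- have := congr1 determinant eEV.
  rewrite !det_mulmx det_tr det_ublock /E det_lblock !det1 !mul1r mulr1 ea det_scalar expr1.
  done.
- move=> i; rewrite eS !mxE big_ord1 ec !mxE.
  have : 0 <= al^-1 * (b 0 i * b 0 i).
    by apply: mulr_ge0; [rewrite invr_ge0 ltW | rewrite -expr2 sqr_ge0].
  rewrite /b !mxE; lra.
Qed.

Lemma hadamard n (V : 'M[R]_n) : V^T = V -> PD V -> \det V <= \prod_(i < n) V i i.
Proof.
elim: n V => [|n IH] V sV P; first by rewrite det_mx00 big_ord0.
have [sS PS dV diag] := @schur n V sV P.
rewrite dV big_ord_recl.
have V0 : 0 < V 0 0 by apply: PD_diag.
apply: ler_wpM2l; first exact: ltW.
apply: le_trans (IH _ sS PS) _.
apply: ler_prod => i _; rewrite ltW ?PD_diag //=.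
have -> : lift ord0 i = rshift 1 i by apply: val_inj.
exact: diag.
Qed.

Lemma qf_scalar n (a : R) (z : 'cV[R]_n) : qf (a%:M) z = a * \sum_(j < n) z j 0 ^+ 2.
Proof.
rewrite /qf /bf mul_mx_scalar -scalemxAl mxE; congr (_ * _).
by rewrite mxE; apply: eq_bigr => j _; rewrite mxE expr2.
Qed.

Lemma sumsq_pos n (z : 'cV[R]_n) : z != 0 -> 0 < \sum_(j < n) z j 0 ^+ 2.
Proof.
move=> nz; rewrite lt_def sumr_ge0 ?andbT; last by move=> j _; apply: sqr_ge0.
apply: contra nz => /eqP /psumr_eq0P h; apply/eqP/matrixP => i j.
rewrite (ord1 j) mxE; apply/eqP; rewrite -sqrf_eq0; apply/eqP/h => //.
by move=> l _; apply: sqr_ge0.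
Qed.

Lemma Good_scalar n (a : R) : 0 < a -> Good (a%:M : 'M[R]_n).
Proof.
move=> ap; split; first exact: tr_scalar_mx.
- by move=> z; rewrite qf_scalar; apply: mulr_ge0; [exact: ltW | apply: sumr_ge0 => j _; exact: sqr_ge0].
- by rewrite det_scalar exprn_gt0.
Qed.

Variables (lam : R) (d k : nat) (x : nat -> 'I_k -> 'cV[R]_d).
Hypothesis lam0 : 0 < lam.

Lemma Vmat_succ t : Vmat lam x t.+1 = Vmat lam x t + \sum_(i < k) x t.+1 i *m (x t.+1 i)^T.
Proof. by rewrite /Vmat big_nat_recr //= addrA. Qed.

Lemma Vmat0 : Vmat lam x 0 = lam%:M.
Proof. by rewrite /Vmat big_geq // addr0. Qed.

Lemma Vmat_Good t : Good (Vmat lam x t).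
Proof.
elim: t => [|t IH]; first by rewrite Vmat0; apply: Good_scalar.
rewrite Vmat_succ; exact: (Good_sum (index_enum 'I_k) _ IH).
Qed.

Lemma Vmat_PD t : PD (Vmat lam x t).
Proof.
move=> z nz; rewrite /Vmat qf_addM qf_scalar.
apply: ltr_pwDl; first by rewrite mulr_gt0 // sumsq_pos.
rewrite qf_sumM; apply: sumr_ge0 => s _; rewrite qf_sumM; apply: sumr_ge0 => i _.
rewrite qf_rank1; exact: sqr_ge0.
Qed.

Lemma Vmat_sym t : (Vmat lam x t)^T = Vmat lam x t.
Proof. by case: (Vmat_Good t). Qed.

Definition s_ t := \sum_(i < k) qf (invmx (Vmat lam x t.-1)) (x t i).

Lemma det_grow t : \det (Vmat lam x t) * (1 + s_ t.+1) <= \det (Vmat lam x t.+1).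
Proof.
rewrite Vmat_succ /s_ /=; exact: (batch (index_enum 'I_k) _ (Vmat_Good t)).
Qed.

Lemma det_prod T : \det (Vmat lam x 0) * \prod_(1 <= t < T.+1) (1 + s_ t) <= \det (Vmat lam x T).
Proof.
elim: T => [|T IH]; first by rewrite big_geq // mulr1.
rewrite big_nat_recr //= mulrA; apply: le_trans (det_grow T).
apply: ler_wpM2r => //; rewrite addr_ge0 // sumr_ge0 // => i _.
exact/qf_inv_ge0/Vmat_Good.
Qed.

Lemma tr_rank1 (y : 'cV[R]_d) : \tr (y *m y^T) = \sum_(j < d) y j 0 ^+ 2.
Proof.
rewrite mxtrace_mulC /mxtrace big_ord1 mxE; apply: eq_bigr => j _.
by rewrite mxE expr2.
Qed.

Lemma sumsq_le (y : 'cV[R]_d) L : norm2 y <= L -> \sum_(j < d) y j 0 ^+ 2 <= L ^+ 2.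
Proof.
rewrite /norm2 => h.
have s0 : 0 <= \sum_(j < d) y j 0 ^+ 2 by apply: sumr_ge0 => j _; apply: sqr_ge0.
rewrite -(sqr_sqrtr s0) expr2 [L ^+ 2]expr2.
by apply: ler_pM => //; apply: sqrtr_ge0.
Qed.

Lemma trace_bound T L : (forall t i, (1 <= t <= T)%N -> norm2 (x t i) <= L) ->
  \tr (Vmat lam x T) <= lam * d%:R + T%:R * k%:R * L ^+ 2.
Proof.
move=> hL; rewrite /Vmat mxtraceD mxtrace_scalar -[lam *+ d]mulr_natr lerD2l.
rewrite raddf_sum /=.
apply: le_trans (_ : \sum_(1 <= t < T.+1) \sum_(i < k) L ^+ 2 <= _).
  rewrite big_nat [X in _ <= X]big_nat; apply: ler_sum => t /andP[t1 tT].
  rewrite raddf_sum /=; apply: ler_sum => i _; rewrite tr_rank1; apply: sumsq_le.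
  by apply: hL; rewrite t1 -ltnS.
rewrite sumr_const_nat subn1 /= sumr_const card_ord le_eqVlt; apply/orP; left; apply/eqP.
by rewrite !mulr_natr; ring.
Qed.

Lemma det_upper T L : (0 < d)%N -> (forall t i, (1 <= t <= T)%N -> norm2 (x t i) <= L) ->
  \det (Vmat lam x T) <= (lam * (1 + L ^+ 2 * k%:R * T%:R / (d%:R * lam))) ^+ d.
Proof.
move=> d0 hL.
apply: le_trans (hadamard (Vmat_sym T) (Vmat_PD T)) _.
have dd : 0 < d%:R :> R by rewrite ltr0n.
have nn : forall i, 0 <= Vmat lam x T i i by move=> i; apply/ltW/PD_diag/Vmat_PD.
have := (leif_AGM (A := predT) (E := fun i : 'I_d => Vmat lam x T i i) (fun i _ => nn i)).1.
rewrite /= => h.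
have cd : #|predT : {pred 'I_d}| = d by rewrite cardT size_enum_ord.
have e2 : \sum_(i in predT) Vmat lam x T i i = \sum_(i < d) Vmat lam x T i i by apply: eq_bigl.
rewrite cd (eq_bigl xpredT) // e2 in h.
apply: le_trans h _.
apply: lerXn2r; rewrite ?nnegrE.
- by apply: divr_ge0; [apply: sumr_ge0 => i _ | apply: ltW].
- by apply: mulr_ge0; [apply: ltW | apply: addr_ge0 => //; apply: divr_ge0;
    [apply: mulr_ge0 => //; apply: mulr_ge0 => //; apply: sqr_ge0 | apply: mulr_ge0 => //; apply: ltW]].
- rewrite ler_pdivrMr //.
  have -> : lam * (1 + L ^+ 2 * k%:R * T%:R / (d%:R * lam)) * d%:R =
            lam * d%:R + T%:R * k%:R * L ^+ 2.
    by field; rewrite ?gt_eqF.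
  exact: trace_bound.
Qed.

Lemma prod_bound T L : (0 < d)%N -> (forall t i, (1 <= t <= T)%N -> norm2 (x t i) <= L) ->
  \prod_(1 <= t < T.+1) (1 + s_ t) <= (1 + L ^+ 2 * k%:R * T%:R / (d%:R * lam)) ^+ d.
Proof.
move=> d0 hL.
have := le_trans (det_prod T) (det_upper d0 hL).
by rewrite Vmat0 det_scalar exprMn ler_pM2l // exprn_gt0.
Qed.
End QF.

Section Ana.
Variable R : realType.

Lemma ln_prod I (r : seq I) (f : I -> R) : (forall i, 0 < f i) ->
  ln (\prod_(i <- r) f i) = \sum_(i <- r) ln (f i).
Proof.
move=> fp; elim: r => [|i r IH]; first by rewrite !big_nil ln1.
rewrite !big_cons lnM ?IH // posrE //; exact: prodr_gt0.
Qed.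

Lemma ln_le_sub1 (y : R) : 0 < y -> ln y <= y - 1.
Proof.
move=> yp; have h := expR_ge1Dx (y - 1).
rewrite addrCA subrr addr0 in h.
by rewrite -ler_ln ?posrE ?expR_gt0 // expRK in h.
Qed.

Lemma key_u (u s : R) : 0 <= u -> u <= 1 -> u <= s -> u <= 2 * ln (1 + s).
Proof.
move=> u0 u1 us.
have up : 0 < 1 + u by lra.
set y := (1 + u)^-1.
have yp : 0 < y by rewrite invr_gt0.
have ey : y * (1 + u) = 1 by rewrite mulVf // gt_eqF.
have h1 : ln y = - ln (1 + u) by rewrite lnV ?posrE.
have h2 := ln_le_sub1 yp.
have h3 : ln (1 + u) <= ln (1 + s) by rewrite ler_ln ?posrE; lra.
have h4 : u <= 2 - 2 * y.
  have : 0 <= (2 - 2 * y - u) * (1 + u) by rewrite mulrBl mulrBl mulrDr mulr1 -mulrA ey; nra.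
  rewrite pmulr_lge0 //; lra.
lra.
Qed.

Lemma CSsum I (r : seq I) (u : I -> R) :
  (\sum_(i <- r) u i) ^+ 2 <= (\sum_(i <- r) 1) * \sum_(i <- r) u i ^+ 2.
Proof.
have h : 0 <= \sum_(i <- r) \sum_(j <- r) (u i - u j) ^+ 2.
  by apply: sumr_ge0 => i _; apply: sumr_ge0 => j _; apply: sqr_ge0.
have e : \sum_(i <- r) \sum_(j <- r) (u i - u j) ^+ 2 =
   (\sum_(i <- r) 1) * (\sum_(i <- r) u i ^+ 2) *+ 2 - (\sum_(i <- r) u i) ^+ 2 *+ 2.
  set A := \sum_(i <- r) 1; set B := \sum_(i <- r) u i ^+ 2; set Cc := \sum_(i <- r) u i.
  have q1 : forall a : R, \sum_(j <- r) a = a * A.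
    by move=> a; rewrite /A mulr_sumr; apply: eq_bigr => j _; rewrite mulr1.
  have q2 : forall a : R, \sum_(j <- r) a * u j = a * Cc.
    by move=> a; rewrite /Cc mulr_sumr.
  have p1 : forall i, \sum_(j <- r) (u i - u j) ^+ 2 = u i ^+ 2 * A - (u i * Cc) *+ 2 + B.
    move=> i; under eq_bigr => j _ do rewrite sqrrB.
    by rewrite big_split sumrB /= sumrMnl q1 q2.
  under eq_bigr => i _ do rewrite p1.
  rewrite big_split sumrB /= sumrMnl q1 -mulr_suml -mulr_suml /Cc -/B.
  by rewrite -/Cc; ring.
lra.
Qed.

Lemma CSsqrt I (r : seq I) (b : I -> R) : (forall i, 0 <= b i) ->
  \sum_(i <- r) Num.sqrt (b i) <= Num.sqrt ((\sum_(i <- r) 1) * \sum_(i <- r) b i).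
Proof.
move=> b0.
have s0 : 0 <= \sum_(i <- r) Num.sqrt (b i) by apply: sumr_ge0 => i _; apply: sqrtr_ge0.
rewrite -[X in X <= _]ger0_norm // -sqrtr_sqr ler_sqrt; last first.
  by apply: mulr_ge0; apply: sumr_ge0 => i _ //; apply: ler01.
apply: le_trans (CSsum r (fun i => Num.sqrt (b i))) _.
by rewrite le_eqVlt; apply/orP; left; apply/eqP; congr (_ * _); apply: eq_bigr => i _; rewrite sqr_sqrtr.
Qed.

Lemma min_sqrt (p q : R) : Num.min (Num.sqrt p) (Num.sqrt q) <= Num.sqrt (Num.min p q).
Proof.
case: (leP p q) => h; first by rewrite ge_min lexx.
by rewrite ge_min lexx orbT.
Qed.

Lemma round1 k (a : 'I_k -> R) : (0 < k)%N -> (forall i, 0 <= a i) ->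
  \sum_(i < k) Num.min (Num.sqrt k%:R)^-1 (Num.sqrt (a i)) <=
  Num.sqrt (k%:R * (2 * ln (1 + \sum_(i < k) a i))).
Proof.
move=> k0 a0.
have kp : 0 < k%:R :> R by rewrite ltr0n.
pose b i := Num.min (k%:R^-1) (a i).
have b0 : forall i, 0 <= b i by move=> i; rewrite le_min invr_ge0 ltW ?a0.
apply: le_trans (_ : \sum_(i < k) Num.sqrt (b i) <= _).
  apply: ler_sum => i _; rewrite -(sqrtrV (ltW kp)); exact: min_sqrt.
apply: le_trans (CSsqrt _ b0) _.
have ek : \sum_(i < k) (1 : R) = k%:R by rewrite sumr_const card_ord.
have L0 : 0 <= 2 * ln (1 + \sum_(i < k) a i).
  apply: mulr_ge0 => //; apply: ln_ge0; rewrite lerDl; apply: sumr_ge0 => i _; exact: a0.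
rewrite ek ler_sqrt; last exact: mulr_ge0 (ltW kp) L0.
rewrite ler_pM2l //; apply: key_u.
- by apply: sumr_ge0 => i _.
- apply: le_trans (_ : \sum_(i < k) k%:R^-1 <= _).
    by apply: ler_sum => i _; rewrite ge_min lexx.
  rewrite sumr_const card_ord.
  have -> : k%:R^-1 *+ k = k%:R^-1 * k%:R :> R by rewrite mulr_natr.
  by rewrite mulVf // gt_eqF.
- by apply: ler_sum => i _; rewrite ge_min lexx orbT.
Qed.

Lemma round2 k (a : 'I_k -> R) : (0 < k)%N -> (forall i, 0 <= a i) ->
  \sum_(i < k) (nat_of_bool ((Num.sqrt k%:R)^-1 < Num.sqrt (a i)))%:R <=
  k%:R * (2 * ln (1 + \sum_(i < k) a i)).
Proof.
move=> k0 a0.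
have kp : 0 < k%:R :> R by rewrite ltr0n.
have sk : 0 < Num.sqrt k%:R :> R by rewrite sqrtr_gt0.
set m := \sum_(i < k) _.
have ind : forall i, (nat_of_bool ((Num.sqrt k%:R)^-1 < Num.sqrt (a i)))%:R <= Num.min 1 (k%:R * a i).
  move=> i; case: ltP => h /=; last by rewrite le_min ler01 mulr_ge0 // ltW.
  rewrite le_min lexx /=.
  rewrite -(ltr_pM2l sk) mulfV ?gt_eqF // -sqrtrM ?ltW // in h.
  rewrite leNgt; apply/negP => h2.
  have : Num.sqrt (k%:R * a i) <= Num.sqrt 1 by rewrite ler_sqrt // ltW.
  by rewrite sqrtr1 leNgt h.
have m1 : m <= k%:R.
  apply: le_trans (_ : \sum_(i < k) (1 : R) <= _); last by rewrite sumr_const card_ord.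
  by apply: ler_sum => i _; apply: le_trans (ind i) _; rewrite ge_min lexx.
have ms : m <= k%:R * \sum_(i < k) a i.
  by rewrite mulr_sumr; apply: ler_sum => i _; apply: le_trans (ind i) _; rewrite ge_min lexx orbT.
have m0 : 0 <= m by apply: sumr_ge0 => i _; apply: ler0n.
have u0 : 0 <= m / k%:R by rewrite divr_ge0 // ltW.
have u1 : m / k%:R <= 1 by rewrite ler_pdivrMr // mul1r.
have us : m / k%:R <= \sum_(i < k) a i by rewrite ler_pdivrMr // mulrC.
have := key_u u0 u1 us.
by rewrite ler_pdivrMr // mulrC.
Qed.
End Ana.

Theorem lemma2 :
  exists (C p : nat), forall (R : realType) (lam L : R) (d k T : nat)
    (x : nat -> 'I_k -> 'cV[R]_d),
    0 < lam -> 0 < L -> (0 < d)%N -> (0 < k)%N -> (0 < T)%N ->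
    (forall t i, (1 <= t <= T)%N -> norm2 (x t i) <= L) ->
    \sum_(1 <= t < T.+1) \sum_(i < k)
        Num.min (Num.sqrt k%:R)^-1 (mnorm (invmx (Vmat lam x t.-1)) (x t i))
      <= C%:R * Num.sqrt (d%:R * k%:R * T%:R) * logfac lam L d k T p
    /\
    \sum_(1 <= t < T.+1) \sum_(i < k)
        (nat_of_bool ((Num.sqrt k%:R)^-1 < mnorm (invmx (Vmat lam x t.-1)) (x t i)))%:R
      <= C%:R * d%:R * k%:R * logfac lam L d k T p.
Proof.
exists 2%N, 1%N => R lam L d k T x lam0 L0 d0 k0 T0 hL.
rewrite /logfac expr1.
set Y := L ^+ 2 * k%:R * T%:R / (d%:R * lam).
set Lam := ln (1 + Y).
have dp : 0 < d%:R :> R by rewrite ltr0n.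
have kp : 0 < k%:R :> R by rewrite ltr0n.
have Tp : 0 < T%:R :> R by rewrite ltr0n.
have Y0 : 0 <= Y.
  apply: divr_ge0; last by apply: mulr_ge0; apply: ltW.
  by apply: mulr_ge0; [apply: mulr_ge0; [apply: sqr_ge0 | apply: ltW] | apply: ltW].
have Lam0 : 0 <= Lam by apply: ln_ge0; rewrite lerDl.
have a0 : forall t i, 0 <= qf (invmx (Vmat lam x t.-1)) (x t i).
  by move=> t i; apply/qf_inv_ge0/Vmat_Good.
have s0 : forall t, 0 <= s_ lam x t by move=> t; apply: sumr_ge0 => i _; apply: a0.
have hsum : \sum_(1 <= t < T.+1) ln (1 + s_ lam x t) <= d%:R * Lam.
  rewrite -ln_prod; last by move=> t; have := s0 t; lra.
  apply: le_trans (_ : ln ((1 + Y) ^+ d) <= _).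
    rewrite ler_ln ?posrE; first exact: prod_bound.
      by apply: prodr_gt0 => t _; have := s0 t; lra.
    by apply: exprn_gt0; lra.
  by rewrite lnXn ?mulr_natl //; lra.
have l0 : forall t, 0 <= ln (1 + s_ lam x t) by move=> t; apply: ln_ge0; rewrite lerDl.
split.
- apply: le_trans (_ : \sum_(1 <= t < T.+1) Num.sqrt (k%:R * (2 * ln (1 + s_ lam x t))) <= _).
    by apply: ler_sum => t _; apply: (round1 k0 (a0 t)).
  apply: le_trans (CSsqrt _ _) _.
    by move=> t; apply: mulr_ge0; [apply: ltW | apply: mulr_ge0].
  rewrite sumr_const_nat subn1 /=.
  apply: le_trans (_ : Num.sqrt (d%:R * k%:R * T%:R * (2 * Lam)) <= _).
    rewrite ler_sqrt; last by apply: mulr_ge0 => //; apply: mulr_ge0 => //; apply: mulr_ge0; apply: ltW.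
    rewrite -mulr_sumr -mulr_sumr.
    have : k%:R * (2 * \sum_(1 <= t < T.+1) ln (1 + s_ lam x t)) <= k%:R * (2 * (d%:R * Lam)).
      by rewrite ler_pM2l // ler_pM2l.
    move=> h; apply: le_trans (_ : T%:R * (k%:R * (2 * (d%:R * Lam))) <= _).
      by rewrite ler_pM2l.
    by rewrite le_eqVlt; apply/orP; left; apply/eqP; ring.
  have dkT : 0 <= d%:R * k%:R * T%:R :> R by rewrite !mulr_ge0 // ltW.
  rewrite (sqrtrM (2 * Lam) dkT).
  have sq : Num.sqrt (2 * Lam) <= 1 + Lam.
    rewrite -[X in _ <= X]ger0_norm; last by lra.
    rewrite -sqrtr_sqr ler_sqrt; first by nra.
    by apply: sqr_ge0.
  have sp : 0 <= Num.sqrt (d%:R * k%:R * T%:R : R) by apply: sqrtr_ge0.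
  have := ler_wpM2l sp sq; nra.
- apply: le_trans (_ : \sum_(1 <= t < T.+1) k%:R * (2 * ln (1 + s_ lam x t)) <= _).
    by apply: ler_sum => t _; apply: (round2 k0 (a0 t)).
  rewrite -mulr_sumr -mulr_sumr.
  have h : k%:R * (2 * \sum_(1 <= t < T.+1) ln (1 + s_ lam x t)) <= k%:R * (2 * (d%:R * Lam)).
    by rewrite ler_pM2l // ler_pM2l.
  apply: le_trans h _.
  have dk : 0 <= d%:R * k%:R :> R by apply: mulr_ge0; apply: ltW.
  nra.
Qed.
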